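(* Let $\mathcal M$ be a symmetric monoidal category and let $\pi_{\mathcal M}\colon\mathcal M\to P(\mathcal M)$ be the functor described in the context. Then a morphism $[A,f]\colon X\to Y$ of $P(\mathcal M)$ is an isomorphism in $P(\mathcal M)$ if and only if $f$ is an isomorphism in $\mathcal M$. In particular, $\pi_{\mathcal M}$ reflects isomorphisms.
   Context: Let $(\mathcal M,\otimes,I,a,\ell,r)$ be a symmetric monoidal category (associator $a$, left unitor $\ell$, right unitor $r$, symmetry $b$). An object $A$ is weakly invertible if there is $B$ with $A\otimes B\cong B\otimes A\cong I$. The category $P(\mathcal M)$ is defined as follows: its objects are those of $\mathcal M$; a morphism $X\to Y$ is an equivalence class $[A,f]$ of pairs $(A,f)$ with $A$ a weakly invertible object of $\mathcal M$ and $f\colon X\to Y\otimes A$ a morphism of $\mathcal M$, where $(A,f)$ and $(A',f')$ are equivalent iff there is an isomorphism $\alpha\colon A\to A'$ in $\mathcal M$ with $(Y\otimes\alpha)\circ f=f'$. The composite of $[A,f]\colon X\to Y$ and $[B,g]\colon Y\to Z$ is $[B\otimes A,\ a_{Z,B,A}\circ(g\otimes A)\circ f]$, and the identity on $X$ is $[I,r_X^{-1}]$. The functor $\pi_{\mathcal M}\colon\mathcal M\to P(\mathcal M)$ is the identity on objects and sends $f\colon X\to Y$ to $[I,\ r_Y^{-1}\circ f]$. *)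

(* Defs.v *)
Set Implicit Arguments.
Unset Strict Implicit.

Record SymMonCat := {
  obj :> Type;
  hom : obj -> obj -> Type;
  comp : forall X Y Z : obj, hom Y Z -> hom X Y -> hom X Z;
  idm : forall X : obj, hom X X;
  comp_id_l : forall X Y (f : hom X Y), comp (idm Y) f = f;
  comp_id_r : forall X Y (f : hom X Y), comp f (idm X) = f;
  comp_assoc : forall X Y Z W (f : hom X Y) (g : hom Y Z) (h : hom Z W),
      comp h (comp g f) = comp (comp h g) f;
  tens : obj -> obj -> obj;
  tensm : forall X X' Y Y', hom X X' -> hom Y Y' -> hom (tens X Y) (tens X' Y');
  tens_id : forall X Y, tensm (idm X) (idm Y) = idm (tens X Y);
  tens_comp : forall X X' X'' Y Y' Y'' (f : hom X X') (f' : hom X' X'')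
      (g : hom Y Y') (g' : hom Y' Y''),
      tensm (comp f' f) (comp g' g) = comp (tensm f' g') (tensm f g);
  unit : obj;
  assoc : forall X Y Z, hom (tens (tens X Y) Z) (tens X (tens Y Z));
  assoc_inv : forall X Y Z, hom (tens X (tens Y Z)) (tens (tens X Y) Z);
  assoc_inv_l : forall X Y Z, comp (assoc_inv X Y Z) (assoc X Y Z) = idm _;
  assoc_inv_r : forall X Y Z, comp (assoc X Y Z) (assoc_inv X Y Z) = idm _;
  assoc_nat : forall X X' Y Y' Z Z' (f : hom X X') (g : hom Y Y') (h : hom Z Z'),
      comp (assoc X' Y' Z') (tensm (tensm f g) h)
      = comp (tensm f (tensm g h)) (assoc X Y Z);
  lunit : forall X, hom (tens unit X) X;
  lunit_inv : forall X, hom X (tens unit X);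
  lunit_inv_l : forall X, comp (lunit_inv X) (lunit X) = idm _;
  lunit_inv_r : forall X, comp (lunit X) (lunit_inv X) = idm _;
  lunit_nat : forall X Y (f : hom X Y),
      comp (lunit Y) (tensm (idm unit) f) = comp f (lunit X);
  runit : forall X, hom (tens X unit) X;
  runit_inv : forall X, hom X (tens X unit);
  runit_inv_l : forall X, comp (runit_inv X) (runit X) = idm _;
  runit_inv_r : forall X, comp (runit X) (runit_inv X) = idm _;
  runit_nat : forall X Y (f : hom X Y),
      comp (runit Y) (tensm f (idm unit)) = comp f (runit X);
  braid : forall X Y, hom (tens X Y) (tens Y X);
  braid_nat : forall X X' Y Y' (f : hom X X') (g : hom Y Y'),
      comp (braid X' Y') (tensm f g) = comp (tensm g f) (braid X Y);
  braid_sym : forall X Y, comp (braid Y X) (braid X Y) = idm (tens X Y);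
  pentagon : forall W X Y Z,
      comp (assoc W X (tens Y Z)) (assoc (tens W X) Y Z)
      = comp (tensm (idm W) (assoc X Y Z))
             (comp (assoc W (tens X Y) Z) (tensm (assoc W X Y) (idm Z)));
  triangle : forall X Y,
      comp (tensm (idm X) (lunit Y)) (assoc X unit Y) = tensm (runit X) (idm Y);
  hexagon : forall X Y Z,
      comp (assoc Y Z X) (comp (braid X (tens Y Z)) (assoc X Y Z))
      = comp (tensm (idm Y) (braid X Z))
             (comp (assoc Y X Z) (tensm (braid X Y) (idm Z)))
}.

Arguments hom {s}.
Arguments comp {s X Y Z}.
Arguments idm {s}.
Arguments tens {s}.
Arguments tensm {s X X' Y Y'}.
Arguments unit {s}.
Arguments assoc {s}.
Arguments runit {s}.
Arguments runit_inv {s}.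

Section P.
Variable M : SymMonCat.

Definition is_iso {X Y : M} (f : hom X Y) : Prop :=
  exists g : hom Y X, comp g f = idm X /\ comp f g = idm Y.

Definition weakly_invertible (A : M) : Prop :=
  exists (B : M) (u : hom (tens A B) unit) (v : hom (tens B A) unit),
    is_iso u /\ is_iso v.

(* Representatives (A, f) of morphisms X -> Y of P(M): f : X -> Y⊗A.
   Equivalence: (A,f) ~ (A',f') iff there is an iso α : A -> A' with
   (Y⊗α)∘f = f'. *)
Definition Pequiv {X Y : M} (A : M) (f : hom X (tens Y A))
    (A' : M) (f' : hom X (tens Y A')) : Prop :=
  exists alpha : hom A A', is_iso alpha /\ comp (tensm (idm Y) alpha) f = f'.

Definition Pcomp {X Y Z : M} (A : M) (f : hom X (tens Y A))
    (B : M) (g : hom Y (tens Z B)) : hom X (tens Z (tens B A)) :=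
  comp (assoc Z B A) (comp (tensm g (idm A)) f).

Definition Pid (X : M) : hom X (tens X unit) := runit_inv X.

Definition P_is_iso {X Y : M} (A : M) (f : hom X (tens Y A)) : Prop :=
  exists (B : M) (g : hom Y (tens X B)),
    weakly_invertible B /\
    Pequiv (Pcomp f g) (Pid X) /\
    Pequiv (Pcomp g f) (Pid Y).

Definition pi_mor {X Y : M} (f : hom X Y) : hom X (tens Y unit) :=
  comp (runit_inv Y) f.

End P.

Arguments is_iso {M X Y}.
Arguments weakly_invertible {M}.
Arguments Pequiv {M X Y A} f {A'} f'.
Arguments Pcomp {M X Y Z A} f {B} g.
Arguments Pid {M}.
Arguments P_is_iso {M X Y A} f.
Arguments pi_mor {M X Y}.

(* Main.v *)
Require Import Defs.

Section S.
Variable M : SymMonCat.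
Notation "g ∘ f" := (comp g f) (at level 40, left associativity).
Notation "f ⊗ g" := (tensm f g) (at level 35).
Local Notation a := (assoc _ _ _).
Local Notation a' := (@assoc_inv M _ _ _).
Local Notation l := (@lunit M _).
Local Notation l' := (@lunit_inv M _).
Local Notation r := (@runit M _).
Local Notation r' := (@runit_inv M _).

Lemma rk {X Y Z W : M} (x : hom Y Z) (y : hom X Y) (z : hom W Z) (w : hom X W) :
  x ∘ y = z ∘ w -> forall V (k : hom V X), x ∘ (y ∘ k) = z ∘ (w ∘ k).
Proof. intros E V k. rewrite !comp_assoc, E. reflexivity. Qed.

Lemma idk {X Y : M} (x : hom Y X) (y : hom X Y) :
  x ∘ y = idm X -> forall V (k : hom V X), x ∘ (y ∘ k) = k.
Proof. intros E V k. rewrite comp_assoc, E, comp_id_l. reflexivity. Qed.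

Lemma tc {X X' X'' Y Y' Y'' : M} (f : hom X X') (f' : hom X' X'')
  (g : hom Y Y') (g' : hom Y' Y'') : (f' ⊗ g') ∘ (f ⊗ g) = (f' ∘ f) ⊗ (g' ∘ g).
Proof. rewrite tens_comp. reflexivity. Qed.

Lemma tcl {X X' X'' Z : M} (f : hom X X') (f' : hom X' X'') :
  (f' ∘ f) ⊗ idm Z = (f' ⊗ idm Z) ∘ (f ⊗ idm Z).
Proof. rewrite <- tens_comp, comp_id_l. reflexivity. Qed.

Lemma tcr {X X' X'' Z : M} (f : hom X X') (f' : hom X' X'') :
  idm Z ⊗ (f' ∘ f) = (idm Z ⊗ f') ∘ (idm Z ⊗ f).
Proof. rewrite <- tens_comp, comp_id_l. reflexivity. Qed.

Lemma inv_unique {X Y : M} (x : hom X Y) (x' y : hom Y X) :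
  x' ∘ x = idm X -> x ∘ y = idm Y -> y = x'.
Proof.
  intros H1 H2. rewrite <- (comp_id_l y), <- H1, <- comp_assoc, H2, comp_id_r.
  reflexivity.
Qed.

Lemma swap_inv {X Y Z W : M} (p : hom Y W) (p' : hom W Y) (q : hom X Z) (q' : hom Z X)
  (x : hom X Y) (y : hom Z W) :
  p' ∘ p = idm Y -> q ∘ q' = idm Z -> p ∘ x = y ∘ q -> x ∘ q' = p' ∘ y.
Proof.
  intros H1 H2 E.
  transitivity (p' ∘ (p ∘ x) ∘ q').
  - rewrite comp_assoc, H1, comp_id_l. reflexivity.
  - rewrite E, <- !comp_assoc, H2, comp_id_r. reflexivity.
Qed.

Lemma assoc_inv_nat {X X' Y Y' Z Z' : M} (f : hom X X') (g : hom Y Y') (h : hom Z Z') :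
  a' ∘ (f ⊗ (g ⊗ h)) = ((f ⊗ g) ⊗ h) ∘ a'.
Proof.
  symmetry. eapply swap_inv; [apply assoc_inv_l | apply assoc_inv_r | apply assoc_nat].
Qed.

Lemma assoc_nat' {X X' Y Y' Z Z' : M} (f : hom X X') (g : hom Y Y') (h : hom Z Z') :
  (f ⊗ g) ⊗ h = a' ∘ ((f ⊗ (g ⊗ h)) ∘ a).
Proof. rewrite <- assoc_nat, comp_assoc, assoc_inv_l, comp_id_l. reflexivity. Qed.

Lemma runit_inv_nat {X Y : M} (f : hom X Y) : r' ∘ f = (f ⊗ idm _) ∘ r'.
Proof.
  symmetry. eapply swap_inv; [apply runit_inv_l | apply runit_inv_r | apply runit_nat].
Qed.

Lemma tI_faithful {X Y : M} (x y : hom X Y) : x ⊗ idm unit = y ⊗ idm unit -> x = y.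
Proof.
  intro E. rewrite <- (comp_id_r x), <- (comp_id_r y), <- (runit_inv_r X), !comp_assoc.
  rewrite <- !runit_nat, E. reflexivity.
Qed.

Lemma kelly (X Y : M) : (idm X ⊗ r) ∘ assoc X Y unit = runit (tens X Y).
Proof.
  apply tI_faithful. rewrite <- triangle.
  rewrite tcl, assoc_nat', <- triangle, tcr, <- !comp_assoc, <- pentagon.
  rewrite (comp_assoc (assoc (tens X Y) unit unit)), <- assoc_nat, tens_id.
  rewrite comp_assoc, comp_assoc, assoc_inv_l, comp_id_l. reflexivity.
Qed.


Lemma rtri (Y A : M) : runit_inv Y ⊗ idm A = assoc_inv Y unit A ∘ (idm Y ⊗ lunit_inv A).
Proof.
  symmetry. apply (inv_unique (runit Y ⊗ idm A)).
  - rewrite tc, runit_inv_l, comp_id_l, tens_id. reflexivity.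
  - rewrite <- triangle, <- !comp_assoc, (idk (assoc Y unit A)) by apply assoc_inv_r.
    rewrite tc, lunit_inv_r, comp_id_l, tens_id. reflexivity.
Qed.

Lemma pent' (Y A B C : M) V (k : hom V (tens Y (tens (tens A B) C))) :
  assoc (tens Y A) B C ∘ ((assoc_inv Y A B ⊗ idm C) ∘ (assoc_inv Y (tens A B) C ∘ k))
  = assoc_inv Y A (tens B C) ∘ ((idm Y ⊗ assoc A B C) ∘ k).
Proof.
  rewrite <- (comp_id_l (assoc (tens Y A) B C ∘ _)), <- (assoc_inv_l Y A (tens B C)).
  rewrite <- !comp_assoc. f_equal.
  rewrite (rk _ _ _ _ (pentagon Y A B C)), <- !comp_assoc. f_equal.
  rewrite (idk (assoc Y A B ⊗ idm C))
    by (rewrite tc, assoc_inv_r, comp_id_l, tens_id; reflexivity).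
  rewrite (idk (assoc Y (tens A B) C)) by apply assoc_inv_r. reflexivity.
Qed.

Lemma keyH (Y A B : M) (u : hom (tens A B) unit) u' (Hu : u ∘ u' = idm _)
  (al : hom (tens B A) unit)
  (Hal : idm A ⊗ al = runit_inv A ∘ (lunit A ∘ ((u ⊗ idm A) ∘ assoc_inv A B A))) :
  (idm (tens Y A) ⊗ al) ∘ (assoc (tens Y A) B A ∘ ((assoc_inv Y A B ⊗ idm A) ∘
     (((idm Y ⊗ u') ⊗ idm A) ∘ (runit_inv Y ⊗ idm A))))
  = runit_inv (tens Y A).
Proof.
  rewrite rtri, (rk _ _ _ _ (eq_sym (assoc_inv_nat _ _ _))), pent'.
  rewrite comp_assoc, <- (tens_id Y A), <- assoc_inv_nat, <- !comp_assoc, !tc, !comp_id_l.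
  rewrite Hal, <- !comp_assoc, (idk (assoc_inv A B A)) by apply assoc_inv_l.
  rewrite (idk (u ⊗ idm A)) by (rewrite tc, Hu, comp_id_l, tens_id; reflexivity).
  rewrite lunit_inv_r, comp_id_r.
  apply (inv_unique (runit (tens Y A))).
  - apply runit_inv_l.
  - rewrite <- kelly, <- !comp_assoc, (idk (assoc Y A unit)) by apply assoc_inv_r.
    rewrite tc, runit_inv_r, comp_id_l, tens_id. reflexivity.
Qed.

Definition eta (P Q : M) (e : hom (tens P Q) unit) (Z : M) : hom (tens P (tens Q Z)) Z :=
  lunit Z ∘ ((e ⊗ idm Z) ∘ assoc_inv P Q Z).
Definition eta' (P Q : M) (e' : hom unit (tens P Q)) (Z : M) : hom Z (tens P (tens Q Z)) :=
  assoc P Q Z ∘ ((e' ⊗ idm Z) ∘ lunit_inv Z).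
Arguments eta {P Q}. Arguments eta' {P Q}.

Lemma eta_nat (P Q : M) e (Z W : M) (x : hom Z W) :
  eta e W ∘ (idm P ⊗ (idm Q ⊗ x)) = x ∘ eta (P:=P) (Q:=Q) e Z.
Proof.
  unfold eta. rewrite <- !comp_assoc, assoc_inv_nat, tens_id, (comp_assoc (assoc_inv P Q Z)), tc,
    comp_id_r, comp_id_l.
  rewrite (comp_assoc _ (lunit Z) x), <- lunit_nat, <- comp_assoc,
    (comp_assoc _ (e ⊗ idm Z)), tc, comp_id_l, comp_id_r. reflexivity.
Qed.
Arguments eta_nat {P Q e Z W}.

Lemma eta_inv1 (P Q : M) e e' (He : e ∘ e' = idm unit) Z :
  eta e Z ∘ eta' (P:=P) (Q:=Q) e' Z = idm Z.
Proof.
  unfold eta, eta'. rewrite <- !comp_assoc, (idk (assoc_inv P Q Z)) by apply assoc_inv_l.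
  rewrite (idk (e ⊗ idm Z)) by (rewrite tc, He, comp_id_l, tens_id; reflexivity).
  apply lunit_inv_r.
Qed.
Arguments eta_inv1 {P Q e e'}.

Lemma eta_inv2 (P Q : M) e e' (He : e' ∘ e = idm _) Z :
  eta' e' Z ∘ eta (P:=P) (Q:=Q) e Z = idm _.
Proof.
  unfold eta, eta'. rewrite <- !comp_assoc, (idk (lunit_inv Z)) by apply lunit_inv_l.
  rewrite (idk (e' ⊗ idm Z)) by (rewrite tc, He, comp_id_l, tens_id; reflexivity).
  apply assoc_inv_r.
Qed.
Arguments eta_inv2 {P Q e e'}.

Lemma F_eq (P Q : M) e e' (He : e' ∘ e = idm _) (Z W : M) (x : hom Z W) :
  idm P ⊗ (idm Q ⊗ x) = eta' e' W ∘ (x ∘ eta (P:=P) (Q:=Q) e Z).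
Proof.
  rewrite <- eta_nat, comp_assoc, eta_inv2 by exact He. rewrite comp_id_l. reflexivity.
Qed.
Arguments F_eq {P Q e e'}.

Lemma faithful (P Q : M) (e : hom (tens P Q) unit) e' (He1 : e ∘ e' = idm _)
  (He2 : e' ∘ e = idm _) (Z W : M) (x y : hom Z W) :
  idm Q ⊗ x = idm Q ⊗ y -> x = y.
Proof.
  intro E.
  assert (Hx : x = eta e W ∘ ((idm P ⊗ (idm Q ⊗ x)) ∘ eta' e' Z)).
  { rewrite (F_eq He2), <- !comp_assoc, (idk (eta e W)) by (apply eta_inv1; exact He1).
    rewrite eta_inv1 by exact He1. rewrite comp_id_r. reflexivity. }
  rewrite Hx, E, (F_eq He2), <- !comp_assoc, (idk (eta e W)) by (apply eta_inv1; exact He1).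
  rewrite eta_inv1 by exact He1. rewrite comp_id_r. reflexivity.
Qed.
Arguments faithful {P Q e e'}.

Lemma full (A B : M) (u : hom (tens A B) unit) u' (Hu1 : u ∘ u' = idm _) (Hu2 : u' ∘ u = idm _)
  (v : hom (tens B A) unit) v' (Hv1 : v ∘ v' = idm _) (Hv2 : v' ∘ v = idm _)
  (C D : M) (psi : hom (tens A C) (tens A D)) psi' (Hp1 : psi ∘ psi' = idm _)
  (Hp2 : psi' ∘ psi = idm _) :
  exists al : hom C D, is_iso al /\ idm A ⊗ al = psi.
Proof.
  exists (eta v D ∘ ((idm B ⊗ psi) ∘ eta' v' C)). split.
  - exists (eta v C ∘ ((idm B ⊗ psi') ∘ eta' v' D)). split.
    + rewrite <- !comp_assoc, (idk (eta' v' D)) by (apply eta_inv2; exact Hv2).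
      rewrite (idk (idm B ⊗ psi')) by (rewrite tc, Hp2, comp_id_l, tens_id; reflexivity).
      apply eta_inv1; exact Hv1.
    + rewrite <- !comp_assoc, (idk (eta' v' C)) by (apply eta_inv2; exact Hv2).
      rewrite (idk (idm B ⊗ psi)) by (rewrite tc, Hp1, comp_id_l, tens_id; reflexivity).
      apply eta_inv1; exact Hv1.
  - apply (faithful Hu1 Hu2). rewrite (F_eq Hv2), <- !comp_assoc.
    rewrite (eta_inv2 Hv2 C), comp_id_r.
    rewrite (idk (eta' v' D)) by (apply eta_inv2; exact Hv2). reflexivity.
Qed.

Lemma keyHk (Y A B : M) (u : hom (tens A B) unit) u' (Hu : u ∘ u' = idm _)
  (al : hom (tens B A) unit)
  (Hal : idm A ⊗ al = runit_inv A ∘ (lunit A ∘ ((u ⊗ idm A) ∘ assoc_inv A B A))) V k :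
  (idm (tens Y A) ⊗ al) ∘ (assoc (tens Y A) B A ∘ ((assoc_inv Y A B ⊗ idm A) ∘
     (((idm Y ⊗ u') ⊗ idm A) ∘ ((runit_inv Y ⊗ idm A) ∘ k))))
  = runit_inv (tens Y A) ∘ (k : hom V _).
Proof. rewrite <- (keyH _ _ _ _ _ Hu _ Hal), <- !comp_assoc. reflexivity. Qed.

Lemma lr_iso {X Y : M} (f : hom X Y) (L : hom Y X) (K : hom X Y) :
  L ∘ f = idm X -> K ∘ L = idm Y -> f ∘ L = idm Y.
Proof.
  intros H1 H2. transitivity ((K ∘ L) ∘ (f ∘ L)).
  - rewrite H2, comp_id_l. reflexivity.
  - rewrite <- comp_assoc, (comp_assoc L f L), H1, comp_id_l. exact H2.
Qed.

Lemma fwd (X Y A : M) (f : hom X (tens Y A)) : P_is_iso f -> is_iso f.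
Proof.
  intros [B [g [_ [[al [[al' [Ha1 Ha2]] Hal]] [be [[be' [Hb1 Hb2]] Hbe]]]]]].
  unfold Pcomp, Pid in *.
  pose (L := runit X ∘ ((idm X ⊗ al) ∘ (assoc X B A ∘ (g ⊗ idm A)))).
  pose (G := runit Y ∘ ((idm Y ⊗ be) ∘ (assoc Y A B ∘ (f ⊗ idm B)))).
  assert (HL : L ∘ f = idm X).
  { unfold L. rewrite <- !comp_assoc, Hal. apply runit_inv_r. }
  assert (HG : G ∘ g = idm Y).
  { unfold G. rewrite <- !comp_assoc, Hbe. apply runit_inv_r. }
  pose (K := (G ⊗ idm A) ∘ (assoc_inv X B A ∘ ((idm X ⊗ al') ∘ runit_inv X))).
  assert (HK : K ∘ L = idm _).
  { unfold K, L. rewrite <- !comp_assoc.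
    rewrite (idk (runit_inv X)) by apply runit_inv_l.
    rewrite (idk (idm X ⊗ al')) by (rewrite tc, Ha1, comp_id_l, tens_id; reflexivity).
    rewrite (idk (assoc_inv X B A)) by apply assoc_inv_l.
    rewrite tc, HG, comp_id_l, tens_id. reflexivity. }
  exists L. split; [exact HL | exact (lr_iso _ _ _ HL HK)].
Qed.

Lemma bwd (X Y A : M) (f : hom X (tens Y A)) :
  weakly_invertible A -> is_iso f -> P_is_iso f.
Proof.
  intros [B [u [v [[u' [Hu1 Hu2]] [v' [Hv1 Hv2]]]]]] [f' [Hf1 Hf2]].
  pose (psi := runit_inv A ∘ (lunit A ∘ ((u ⊗ idm A) ∘ assoc_inv A B A))).
  pose (psi' := assoc A B A ∘ ((u' ⊗ idm A) ∘ (lunit_inv A ∘ runit A))).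
  assert (Hp1 : psi ∘ psi' = idm _).
  { unfold psi, psi'. rewrite <- !comp_assoc.
    rewrite (idk (assoc_inv A B A)) by apply assoc_inv_l.
    rewrite (idk (u ⊗ idm A)) by (rewrite tc, Hu2, comp_id_l, tens_id; reflexivity).
    rewrite (idk (lunit A)) by apply lunit_inv_r. apply runit_inv_l. }
  assert (Hp2 : psi' ∘ psi = idm _).
  { unfold psi, psi'. rewrite <- !comp_assoc.
    rewrite (idk (runit A)) by apply runit_inv_r.
    rewrite (idk (lunit_inv A)) by apply lunit_inv_l.
    rewrite (idk (u' ⊗ idm A)) by (rewrite tc, Hu1, comp_id_l, tens_id; reflexivity).
    apply assoc_inv_r. }
  destruct (full _ _ _ _ Hu2 Hu1 _ _ Hv2 Hv1 _ _ _ _ Hp1 Hp2) as [al [Hal1 Hal2]].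
  exists B, ((f' ⊗ idm B) ∘ (assoc_inv Y A B ∘ ((idm Y ⊗ u') ∘ runit_inv Y))).
  split; [| split].
  - exists A, v, u. split; [exists v' | exists u']; split; assumption.
  - exists al. split; [exact Hal1|]. unfold Pcomp, Pid.
    rewrite !tcl, <- !comp_assoc, (rk _ _ _ _ (assoc_nat _ _ _)), tens_id.
    assert (E : (idm X ⊗ al) ∘ (f' ⊗ idm (tens B A)) = (f' ⊗ idm unit) ∘ (idm _ ⊗ al)).
    { rewrite !tc, !comp_id_l, !comp_id_r. reflexivity. }
    rewrite (rk _ _ _ _ E), (keyHk _ _ _ _ _ Hu2 _ Hal2).
    rewrite comp_assoc, <- runit_inv_nat, <- comp_assoc, Hf1, comp_id_r. reflexivity.
  - exists u. split; [exists u'; split; assumption |]. unfold Pcomp, Pid.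
    rewrite <- ?comp_assoc.
    rewrite (idk (f ⊗ idm B)) by (rewrite tc, Hf2, comp_id_l, tens_id; reflexivity).
    rewrite (idk (assoc Y A B)) by apply assoc_inv_r.
    rewrite (idk (idm Y ⊗ u)) by (rewrite tc, Hu2, comp_id_l, tens_id; reflexivity).
    reflexivity.
Qed.
End S.

Theorem lemma3p6 (M : SymMonCat) :
  (forall (X Y A : M) (f : hom X (tens Y A)),
      weakly_invertible A -> (P_is_iso f <-> is_iso f)) /\
  (forall (X Y : M) (f : hom X Y), P_is_iso (pi_mor f) -> is_iso f).
Proof.
  split.
  - intros X Y A f WA. split; [apply fwd | apply bwd; exact WA].
  - intros X Y f H. destruct (fwd _ _ _ _ _ H) as [h [H1 H2]]. unfold pi_mor in *.
    exists (comp h (runit_inv Y)). split.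
    + rewrite <- comp_assoc. exact H1.
    + transitivity (comp (runit Y) (comp (comp (comp (runit_inv Y) f) h) (runit_inv Y))).
      * rewrite <- !comp_assoc, (comp_assoc _ (runit_inv Y) (runit Y)), runit_inv_r,
          comp_id_l. reflexivity.
      * rewrite H2, comp_id_l. apply runit_inv_r.
Qed.
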